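(* Every $K$-analytic Rothberger space is projectively countable.
   Context: All spaces are completely regular. A space is $K$-analytic if it is a continuous image of a Lindelöf Čech-complete space. $X$ is Rothberger if for every sequence $(\mathcal{U}_n)_{n<\omega}$ of open covers there are $U_n\in\mathcal{U}_n$ such that $\{U_n:n<\omega\}$ covers $X$. $X$ is projectively countable if every continuous image of $X$ in a separable metrizable space is countable. *)

(* Defs.v *)
From HB Require Import structures.
From mathcomp Require Import all_boot all_order all_algebra.
From mathcomp Require Import all_classical all_reals all_analysis.
From mathcomp Require Import Rstruct Rstruct_topology.

Set Implicit Arguments.
Unset Strict Implicit.
Unset Printing Implicit Defensive.
Import Order.TTheory GRing.Theory Num.Theory.

Local Open Scope classical_set_scope.
Local Open Scope ring_scope.

Notation Real := Rdefinitions.R.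

Definition completely_regular (X : topologicalType) : Prop :=
  hausdorff_space X /\
  forall (B : set X) (a : X), closed B -> ~ B a ->
    exists f : X -> Real, continuous f /\ f a = 0 /\ (forall b, B b -> f b = 1).

Definition open_cover (X : topologicalType) (C : set (set X)) : Prop :=
  (forall U, C U -> open U) /\ \bigcup_(U in C) U = [set: X].

Definition lindelof (X : topologicalType) : Prop :=
  forall C : set (set X), open_cover C ->
    exists D : set (set X), [/\ D `<=` C, countable D & \bigcup_(U in D) U = [set: X]].

Definition embedding (Y K : topologicalType) (e : Y -> K) : Prop :=
  [/\ injective e, continuous e &
     forall U : set Y, open U -> exists V : set K, open V /\ e @` U = range e `&` V].

(* Čech-complete: a completely regular space which is a G_delta in some
   Hausdorff compactification. *)
Definition cech_complete (Y : topologicalType) : Prop :=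
  completely_regular Y /\
  exists (K : topologicalType) (e : Y -> K),
    [/\ compact [set: K], hausdorff_space K, embedding e,
        closure (range e) = [set: K] &
        exists2 F : nat -> set K, (forall n, open (F n)) & range e = \bigcap_n F n].

Definition K_analytic (X : topologicalType) : Prop :=
  exists (Y : topologicalType) (f : Y -> X),
    [/\ lindelof Y, cech_complete Y, continuous f & range f = [set: X]].

Definition rothberger (X : topologicalType) : Prop :=
  forall Us : nat -> set (set X), (forall n, open_cover (Us n)) ->
    exists u : nat -> set X, (forall n, Us n (u n)) /\ \bigcup_n u n = [set: X].

Definition metrizable (M : topologicalType) : Prop :=
  exists d : M -> M -> Real,
    [/\ (forall x y, 0 <= d x y),
        (forall x y, d x y = 0 <-> x = y),
        (forall x y, d x y = d y x),
        (forall x y z, d x z <= d x y + d y z) &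
        (forall A : set M, open A <->
           (forall x, A x -> exists2 eps : Real, 0 < eps &
              [set y | d x y < eps] `<=` A))].

Definition separable (M : topologicalType) : Prop :=
  exists D : set M, countable D /\ closure D = [set: M].

Definition projectively_countable (X : topologicalType) : Prop :=
  forall (M : topologicalType) (f : X -> M),
    metrizable M -> separable M -> continuous f -> countable (range f).

(* Main.v *)
Require Import Defs.
From HB Require Import structures.
From mathcomp Require Import all_boot all_order all_algebra.
From mathcomp Require Import all_classical all_reals all_analysis.
From mathcomp Require Import Rstruct Rstruct_topology.
From mathcomp Require Import lra.
Set Implicit Arguments.
Unset Strict Implicit.
Unset Printing Implicit Defensive.
Import Order.TTheory GRing.Theory Num.Theory.
Local Open Scope classical_set_scope.
Local Open Scope ring_scope.


Section Metric.
Variables (M : topologicalType) (d : M -> M -> Rdefinitions.R).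
Hypotheses (h0 : forall x y, 0 <= d x y) (heq : forall x y, d x y = 0 <-> x = y)
  (hsym : forall x y, d x y = d y x) (htri : forall x y z, d x z <= d x y + d y z)
  (hopen : forall A : set M, open A <->
           (forall x, A x -> exists2 eps : Rdefinitions.R, 0 < eps &
              [set y | d x y < eps] `<=` A)).

Definition mball c r := [set y | d c y < r].
Definition cball c r := [set y | d c y <= r].

Lemma mball_open c r : open (mball c r).
Proof.
apply/hopen => x /= hx; exists (r - d c x); first by rewrite subr_gt0.
move=> y; rewrite /mball /= => hy; have := htri c x y; lra.
Qed.

Lemma cball_closed c r : closed (cball c r).
Proof.
rewrite -[cball c r]setCK closedC; apply/hopen => x /= hx.
have hx' : r < d c x by rewrite ltNge; apply/negP.
exists (d c x - r); first by rewrite subr_gt0.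
move=> y; rewrite /cball /= => hy hc; have := htri c y x; rewrite (hsym y x); lra.
Qed.

Lemma mball_nbhs c r : 0 < r -> nbhs c (mball c r).
Proof.
move=> r0; apply: open_nbhs_nbhs; split; first exact: mball_open.
by rewrite /mball /= (proj2 (heq c c) erefl).
Qed.

Variables (Dd : set M).
Hypotheses (cD : countable Dd) (dense : closure Dd = [set: M]).

Lemma dense_near z r : 0 < r -> exists2 c, Dd c & d z c < r.
Proof.
move=> r0; have : closure Dd z by rewrite dense.
move=> /(_ _ (mball_nbhs z r0)) [c [Dc hc]]; by exists c.
Qed.

Lemma arch_inv (eps : Rdefinitions.R) : 0 < eps -> exists k : nat, 2 / k.+1%:R < eps.
Proof.
move=> e0; have h := truncnS_gt (2 / eps).
exists (Num.truncn (2 / eps)); move: h.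
set m := (Num.truncn _).+1%:R => h.
have m0 : 0 < m by rewrite /m ltr0n.
rewrite ltr_pdivrMr // mulrC -ltr_pdivrMr //.
Qed.

Definition cond (S : set M) z := forall eps, 0 < eps -> ~ countable (S `&` mball z eps).

Lemma noncond_countable S : countable (S `&` ~` cond S).
Proof.
set P := [set i : M * nat | Dd i.1 /\ countable (S `&` mball i.1 (1 / i.2.+1%:R))].
have cP : countable P.
  apply: (@sub_countable _ _ _ (Dd `*` [set: nat])); last exact: countableX cD (countableP _).
  by apply: subset_card_le => i [Di _].
apply: (@sub_countable _ _ _ (\bigcup_(i in P) (S `&` mball i.1 (1 / i.2.+1%:R)))).
  apply: subset_card_le => z [Sz].
  move=> /existsNP [eps /not_implyP [e0 /contrapT ceps]].
  have [k hk] := arch_inv e0.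
  have k0 : 0 < 1 / k.+1%:R :> Rdefinitions.R by rewrite divr_gt0 // ltr0n.
  have [c Dc hc] := dense_near z k0.
  have inb : mball c (1 / k.+1%:R) `<=` mball z eps.
    move=> w; rewrite /mball /= => hw; have := htri z c w.
    have : 2 / k.+1%:R = 1 / k.+1%:R + 1 / k.+1%:R :> Rdefinitions.R.
      by rewrite -mulrDl.
    move=> e1 t; apply: (le_lt_trans t); apply: lt_trans hk; rewrite e1; exact: ltrD.
  exists (c, k) => /=.
    split => //; apply: (@sub_countable _ _ _ (S `&` mball z eps)) => //.
    by apply: subset_card_le => w [Sw bw]; split => //; exact: inb.
  split => //; rewrite /mball /= hsym //.
apply: bigcup_countable => // i [_ ci]; exact: ci.
Qed.

Lemma countU (A B : set M) : countable A -> countable B -> countable (A `|` B).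
Proof.
move=> cA cB.
have -> : A `|` B = \bigcup_(i in [set: bool]) (if i then A else B).
  apply/seteqP; split => x.
    by case=> h; [exists true|exists false].
  by case=> -[] _ h; [left|right].
apply: bigcup_countable; first exact: countableP.
by move=> [] _.
Qed.

Lemma cond_exists S : ~ countable S ->
  exists p q, p <> q /\ S p /\ S q /\ cond S p /\ cond S q.
Proof.
move=> nS; apply: contrapT => hno; apply: nS.
have : countable (S `&` cond S).
  case: (pselect (exists p, (S `&` cond S) p)) => [[p [Sp cp]]|hn]; last first.
    suff -> : S `&` cond S = set0 by exact: countable0.
    by apply/seteqP; split => // x hx; exfalso; apply: hn; exists x.
  apply: (@sub_countable _ _ _ [set p]); last exact: countable1.
  apply: subset_card_le => q [Sq cq]; apply: contrapT => hpq.
  by apply: hno; exists p, q; do !split => //; move=> e; apply: hpq; rewrite e.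
move=> c1; have c2 := noncond_countable S.
apply: (@sub_countable _ _ _ ((S `&` cond S) `|` (S `&` ~` cond S))).
  apply: subset_card_le => x Sx.
  by case: (pselect (cond S x)) => h; [left|right].
exact: countU.
Qed.
End Metric.

Section Step.
Variables (Y K M : topologicalType) (d : M -> M -> Rdefinitions.R).
Hypotheses (h0 : forall x y, 0 <= d x y) (heq : forall x y, d x y = 0 <-> x = y)
  (hsym : forall x y, d x y = d y x) (htri : forall x y z, d x z <= d x y + d y z)
  (hopen : forall A : set M, open A <->
           (forall x, A x -> exists2 eps : Rdefinitions.R, 0 < eps &
              [set y | d x y < eps] `<=` A)).
Variables (g : Y -> M) (e : Y -> K) (Fs : nat -> set K).
Hypotheses (g_cont : continuous g) (e_inj : injective e) (e_cont : continuous e)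
  (e_open : forall U : set Y, open U -> exists V : set K, open V /\ e @` U = range e `&` V)
  (Kc : compact [set: K]) (Kh : hausdorff_space K)
  (Fo : forall n, open (Fs n)) (Fe : range e = \bigcap_n Fs n) (Ylin : lindelof Y).

Lemma half (K0 : set K) (n : nat) (c : M) (r : Rdefinitions.R) : 0 < r -> closed K0 ->
  cond d (g @` (e @^-1` K0)) c -> exists K',
  [/\ closed K', K' `<=` K0, K' `<=` Fs n, ~ countable (g @` (e @^-1` K')) &
      g @` (e @^-1` K') `<=` cball d c r].
Proof.
move=> r0 cK0 hc.
set A' := e @^-1` K0 `&` g @^-1` cball d c (r / 2).
have cA' : closed A'.
  apply: closedI; apply: preimage_closed => //; exact: cball_closed.
have nA' : ~ countable (g @` A').
  have r20 : 0 < r / 2 by rewrite divr_gt0.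
  move=> cA; apply: (hc _ r20); apply: (@sub_countable _ _ _ (g @` A')) => //.
  apply: subset_card_le => z [[y Ky <-]]; rewrite /mball /= => hz.
  by exists y => //; split => //; rewrite /cball /=; exact: ltW.
set IW := [set W : set K | open W /\ closure W `<=` Fs n /\
   e @^-1` closure W `<=` g @^-1` cball d c r].
set C := [set U : set Y | (exists2 W, IW W & U = e @^-1` W) \/ U = ~` A'].
have oc : open_cover C.
  split.
    move=> U [[W [oW _] ->]| ->].
      by apply: open_comp => // x _; exact: e_cont.
    by rewrite openC.
  apply/seteqP; split => // y _.
  case: (pselect (A' y)) => hy; last by exists (~` A') => //; right.
  have pre : open (g @^-1` mball d c r).
    by apply: open_comp => //; exact: mball_open.
  have [V [oV eV]] := e_open pre.
  have gyO : mball d c r (g y).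
    case: hy => _; rewrite /cball /mball /= => h; lra.
  have eyV : V (e y).
    have : (range e `&` V) (e y) by rewrite -eV; exists y.
    by case.
  have eyF : Fs n (e y).
    have : range e (e y) by exists y.
    by rewrite Fe => /(_ n I).
  have nb : nbhs (e y) (V `&` Fs n).
    by apply: open_nbhs_nbhs; split => //; exact: openI.
  have reg := compact_regular Kh Kc (@filterT _ _ _ : nbhs (e y) setT).
  have reg2 : filter_from (nbhs (e y)) closure (V `&` Fs n) by apply: reg.
  have [C' nC' clC'] := reg2.
  exists (e @^-1` interior C'); last by [].
  left; exists (interior C') => //; split; first exact: open_interior.
  have clW : closure (interior C') `<=` V `&` Fs n.
    by move=> x hx; apply: clC'; apply: (closureS (@interior_subset _ C')).
  split; first by move=> x /clW [].
  move=> z /clW [Vz _].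
  have : (range e `&` V) (e z) by split => //; exists z.
  rewrite -eV => -[z' Oz' /e_inj ez]; rewrite -ez.
  by move: Oz'; rewrite /mball /cball /= => h; exact: ltW.
have [Dc [DC cDc covD]] := Ylin oc.
case: (pselect (exists2 U, Dc U & ~ countable (g @` (U `&` A')))) => [[U DU nU] | hno].
  case: (DC _ DU) => [[W [oW [clF clB]] eU]| eU]; last first.
    by exfalso; apply: nU; rewrite eU setICl image_set0; exact: countable0.
  exists (K0 `&` closure W); split.
  - by apply: closedI => //; exact: closed_closure.
  - by move=> x [].
  - by move=> x [_ /clF].
  - move=> cc; apply: nU; apply: (@sub_countable _ _ _ (g @` (e @^-1` (K0 `&` closure W)))) => //.
    apply: subset_card_le; apply: image_subset => y [Uy [Ky _]]; split => //.
    by apply: subset_closure; move: Uy; rewrite eU.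
  - by move=> z [y [_ hy] <-]; exact: clB.
exfalso; apply: nA'.
apply: (@sub_countable _ _ _ (\bigcup_(U in Dc) g @` (U `&` A'))).
  apply: subset_card_le => z [y Ay <-].
  have : (\bigcup_(U in Dc) U) y by rewrite covD.
  by case=> U DU Uy; exists U => //; exists y.
apply: bigcup_countable => // U DU; apply: contrapT => nc; apply: hno; by exists U.
Qed.


Variables (Dd : set M).
Hypotheses (cDd : countable Dd) (dense : closure Dd = [set: M]).

Definition InvS (n : nat) (st : set K * set M) :=
  [/\ closed st.1, closed st.2, ~ countable (g @` (e @^-1` st.1)),
      g @` (e @^-1` st.1) `<=` st.2 & forall m, (m < n)%N -> st.1 `<=` Fs m].

Lemma step n st : InvS n st -> exists st0 st1,
  [/\ InvS n.+1 st0, InvS n.+1 st1, st0.1 `<=` st.1, st1.1 `<=` st.1 &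
      st0.2 `&` st1.2 = set0].
Proof.
case: st => K0 D0 [/= cK cD nc sub sF].
have [p [q [pq [_ [_ [cp cq]]]]]] := cond_exists heq hsym htri hopen cDd dense nc.
set r := d p q / 3.
have dpq : 0 < d p q.
  rewrite lt_neqAle h0 andbT; apply/eqP => h; apply: pq; apply/heq; by rewrite h.
have r0 : 0 < r by rewrite divr_gt0.
have mk : forall c K1, closed K1 -> K1 `<=` K0 -> K1 `<=` Fs n ->
    ~ countable (g @` (e @^-1` K1)) -> g @` (e @^-1` K1) `<=` cball d c r ->
    InvS n.+1 (K1, D0 `&` cball d c r).
  move=> c K1 c1 s1 f1 n1 b1; split => //=.
  - by apply: closedI => //; exact: cball_closed.
  - move=> z hz; split; last exact: b1.
    by apply: sub; move: hz; apply: image_subset => y /= /s1.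
  - move=> m; rewrite ltnS leq_eqVlt => /orP [/eqP -> //|hm].
    by move=> x /s1; apply: sF.
have [K1 [c1 s1 f1 n1 b1]] := half n r0 cK cp.
have [K2 [c2 s2 f2 n2 b2]] := half n r0 cK cq.
exists (K1, D0 `&` cball d p r), (K2, D0 `&` cball d q r); split => //=.
- exact: mk.
- exact: mk.
apply/seteqP; split => // z [[_ hp] [_ hq]].
move: hp hq; rewrite /cball /= => hp hq.
have := htri p z q; rewrite (hsym z q); rewrite /r in hp hq; lra.
Qed.

Fixpoint tree (sf : nat * (set K * set M) -> (set K * set M) * (set K * set M))
  (s : seq bool) : set K * set M :=
  match s with
  | [::] => (setT, setT)
  | b :: s' => let pr := sf (size s', tree sf s') in if b then pr.2 else pr.1
  end.

End Step.

Lemma nested_compact (K : topologicalType) (Kb : nat -> set K) :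
  compact [set: K] -> (forall n, closed (Kb n)) ->
  (forall n, Kb n.+1 `<=` Kb n) -> (forall n, Kb n !=set0) ->
  exists k, forall n, Kb n k.
Proof.
move=> Kc cl dec ne.
have decr : forall m n, (m <= n)%N -> Kb n `<=` Kb m.
  move=> m; elim => [|n IH] hmn.
    by rewrite leqn0 in hmn; move/eqP: hmn => ->.
  rewrite leq_eqVlt in hmn; case/orP: hmn => [/eqP -> //|hlt].
  by move=> x /dec; apply: IH.
set F := filter_from [set: nat] Kb.
have FF : ProperFilter F.
  apply: filter_from_proper; last by move=> i _; exact: ne.
  apply: filter_from_filter; first by exists 0%N.
  move=> i j _ _; exists (maxn i j) => // x hx.
  by split; apply: (decr _ (maxn i j)) hx; rewrite ?leq_maxl ?leq_maxr.
have [k [_ ck]] := Kc F FF (@filterT _ _ _).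
exists k => n; apply: (cl n) => B nB.
by apply: ck => //; exists n.
Qed.

Fixpoint brs (pick : nat -> seq bool -> bool) (n : nat) : seq bool :=
  match n with
  | 0 => [::]
  | n'.+1 => pick n' (brs pick n') :: brs pick n'
  end.

Lemma size_brs pick n : size (brs pick n) = n.
Proof. by elim: n => //= n ->. Qed.

Section Construct.
Variables (Y K M : topologicalType) (d : M -> M -> Rdefinitions.R).
Hypotheses (h0 : forall x y, 0 <= d x y) (heq : forall x y, d x y = 0 <-> x = y)
  (hsym : forall x y, d x y = d y x) (htri : forall x y z, d x z <= d x y + d y z)
  (hopen : forall A : set M, open A <->
           (forall x, A x -> exists2 eps : Rdefinitions.R, 0 < eps &
              [set y | d x y < eps] `<=` A)).
Variables (g : Y -> M) (e : Y -> K) (Fs : nat -> set K).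
Hypotheses (g_cont : continuous g) (e_inj : injective e) (e_cont : continuous e)
  (e_open : forall U : set Y, open U -> exists V : set K, open V /\ e @` U = range e `&` V)
  (Kc : compact [set: K]) (Kh : hausdorff_space K)
  (Fo : forall n, open (Fs n)) (Fe : range e = \bigcap_n Fs n) (Ylin : lindelof Y).
Variables (Dd : set M).
Hypotheses (cDd : countable Dd) (dense : closure Dd = [set: M]).

Lemma construct : ~ countable (range g) ->
  exists Dp : seq bool -> set M,
    (forall s, [/\ closed (Dp (false :: s)), closed (Dp (true :: s)) &
                   Dp (false :: s) `&` Dp (true :: s) = set0]) /\
    forall pick, exists y, forall n, Dp (brs pick n.+1) (g y).
Proof.
move=> nc.
have stp := step h0 heq hsym htri hopen g_cont e_inj e_cont e_open Kc Kh Fo Fe Ylin cDd dense.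
have : forall p : nat * (set K * set M), exists q : (set K * set M) * (set K * set M),
    InvS g e Fs p.1 p.2 -> [/\ InvS g e Fs p.1.+1 q.1, InvS g e Fs p.1.+1 q.2,
      q.1.1 `<=` p.2.1, q.2.1 `<=` p.2.1 & q.1.2 `&` q.2.2 = set0].
  move=> p; case: (pselect (InvS g e Fs p.1 p.2)) => hI; last first.
    by exists ((setT, setT), (setT, setT)).
  have [st0 [st1 H]] := stp _ _ hI; by exists (st0, st1).
move=> /choice [sf hsf].
have inv : forall s, InvS g e Fs (size s) (tree sf s).
  elim => [|b s IH].
    by split => //=.
  have [i0 i1 _ _ _] := hsf (size s, tree sf s) IH.
  by case: b.
exists (fun s => (tree sf s).2); split.
  move=> s; have [i0 i1 _ _ dj] := hsf (size s, tree sf s) (inv s).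
  by case: i0 => _ c0 _ _ _; case: i1 => _ c1 _ _ _; split.
move=> pick.
set Kb := fun n => (tree sf (brs pick n)).1.
have invb : forall n, InvS g e Fs n (tree sf (brs pick n)).
  by move=> n; have := inv (brs pick n); rewrite size_brs.
have [k hk] : exists k, forall n, Kb n k.
  apply: nested_compact => //.
  - by move=> n; case: (invb n).
  - move=> n; rewrite /Kb /=.
    have [_ _ s0 s1 _] := hsf (size (brs pick n), tree sf (brs pick n)) (inv _).
    by case: (pick n _).
  - move=> n; case: (invb n) => _ _ nc' _ _.
    apply: contrapT => hne; apply: nc'.
    suff -> : e @^-1` (tree sf (brs pick n)).1 = set0 by rewrite image_set0; exact: countable0.
    by apply/seteqP; split => // y hy; apply: hne; exists (e y).
have : range e k.
  rewrite Fe => m _; have := hk m.+1; case: (invb m.+1) => _ _ _ _ sF.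
  by apply: sF.
move=> [y _ eyk]; exists y => n.
case: (invb n.+1) => _ _ _ sub _; apply: sub; exists y => //=.
rewrite /preimage /= eyk; exact: (hk n.+1).
Qed.
End Construct.

Lemma sub_eq0 (T : Type) (A B C : set T) : A `<=` B -> B `&` C = set0 -> A `&` C = set0.
Proof.
move=> AB BC; apply/seteqP; split => // x [ax cx].
have : (B `&` C) x by split => //; exact: AB.
by rewrite BC.
Qed.

Lemma good_cover (M : topologicalType) n : forall (Dp : seq bool -> set M),
  (forall s, [/\ closed (Dp (false :: s)), closed (Dp (true :: s)) &
                   Dp (false :: s) `&` Dp (true :: s) = set0]) ->
  forall z, exists U, [/\ open U, U z & forall s, size s = n ->
     U `&` Dp (false :: s) = set0 \/ U `&` Dp (true :: s) = set0].
Proof.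
elim: n => [|n IH] Dp HD z.
  have [c0 c1 dj] := HD [::].
  case: (pselect (Dp [:: false] z)) => hz.
    exists (~` Dp [:: true]); split; first by rewrite openC.
      move=> h1; have : (Dp [:: false] `&` Dp [:: true]) z by [].
      by rewrite dj.
    by case => // _; right; rewrite setICl.
  exists (~` Dp [:: false]); split => //; first by rewrite openC.
  by case => // _; left; rewrite setICl.
pose Dp0 t := match t with b :: t' => Dp (b :: false :: t') | [::] => Dp [::] end.
pose Dp1 t := match t with b :: t' => Dp (b :: true :: t') | [::] => Dp [::] end.
have [V0 [oV0 zV0 gV0]] := IH Dp0 (fun s => HD (false :: s)) z.
have [V1 [oV1 zV1 gV1]] := IH Dp1 (fun s => HD (true :: s)) z.
exists (V0 `&` V1); split => //; first exact: openI.
move=> [|c s'] //= [hs]; case: c.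
  by case: (gV1 _ hs) => h; [left|right]; apply: sub_eq0 h => x [].
by case: (gV0 _ hs) => h; [left|right]; apply: sub_eq0 h => x [].
Qed.

Theorem theorem3p33 (X : topologicalType) :
  completely_regular X -> K_analytic X -> rothberger X -> projectively_countable X.
Proof.
move=> _ [Y [h [Ylin [_ [Kt [e [Kc Kh [e_inj e_cont e_open] _ [Fs Fo Fe]]]]] h_cont h_surj]]].
move=> rot M f [d [h0 heq hsym htri hopen]] [Dd [cDd dense]] f_cont.
apply: contrapT => nc.
have g_cont : continuous (f \o h).
  by move=> x; apply: continuous_comp; [exact: h_cont|exact: f_cont].
have ncg : ~ countable (range (f \o h)).
  suff -> : range (f \o h) = range f by [].
  apply/seteqP; split => z [x _ <-]; first by exists (h x).
  have : range h x by rewrite h_surj.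
  by case=> y _ <-; exists y.
have [Dp [HD Hbr]] := construct h0 heq hsym htri hopen g_cont e_inj e_cont e_open Kc Kh Fo Fe Ylin cDd dense ncg.
pose good n (U : set M) := forall s, size s = n ->
     U `&` Dp (false :: s) = set0 \/ U `&` Dp (true :: s) = set0.
pose Us n := [set f @^-1` U | U in [set U | open U /\ good n U]].
have oc : forall n, open_cover (Us n).
  move=> n; split.
    by move=> _ [U [oU _] <-]; apply: open_comp => // x _; exact: f_cont.
  apply/seteqP; split => // x _.
  have [U [oU Ux gU]] := good_cover n HD (f x).
  by exists (f @^-1` U) => //; exists U.
have [u [hu cov]] := rot Us oc.
have /choice [Un hUn] : forall n, exists U, (open U /\ good n U) /\ f @^-1` U = u n.
  by move=> n; case: (hu n) => U HU eq; exists U.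
pose pick n s := if pselect (Un n `&` Dp (false :: s) = set0) then false else true.
have hpick : forall n s, size s = n -> Un n `&` Dp (pick n s :: s) = set0.
  move=> n s hs; rewrite /pick; case: pselect => // hn.
  by case: ((hUn n).1.2 s hs).
have [y hy] := Hbr pick.
have : (\bigcup_n u n) (h y) by rewrite cov.
case => n _; rewrite -(hUn n).2 => hun.
have : (Un n `&` Dp (pick n (brs pick n) :: brs pick n)) (f (h y)).
  by split => //; exact: (hy n).
by rewrite hpick ?size_brs.
Qed.
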